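(* Let $X\in\mathbb{R}^{n\times p}$ with columns $X_1,\ldots,X_p$, let $\lambda_1>0$, and assume $np<p(p-1)/2$. (SPLICE) Let $D\in\mathbb{R}^{p\times p}$ be any diagonal matrix with positive diagonal entries (the previous iterate $\hat D^{(i-1)}$). Then there is a minimizer $\hat B$, over matrices $B\in\mathbb{R}^{p\times p}$ with zero diagonal, of $$ -\tfrac12\log\det D + \tfrac12\sum_{m=1}^p \frac{1}{D_{mm}^2}\big\|X_m - X_{-m}(B_{m\cdot})^T\big\|_2^2 + \lambda_1\|B\|_1 $$ such that $\hat\Omega^{\mathrm{spl}} = D^{-2}(I-\hat B)$ satisfies $\operatorname{card}\operatorname{vech}\hat\Omega^{\mathrm{spl}}\le np$. (SPACE) Let $\Omega_{\mathrm{diag}}$ be any diagonal matrix with positive diagonal entries (the previous iterate). Then there is a minimizer $\hat\Omega_{\mathrm{off}}$, over symmetric matrices $\Omega_{\mathrm{off}}\in\mathbb{R}^{p\times p}$ with zero diagonal, of $$ -\tfrac12\log\det\Omega_{\mathrm{diag}} + \tfrac12\sum_{m=1}^p\Omega_{\mathrm{diag},mm}\Big\|X_m-\sum_{j\ne m}\Omega_{\mathrm{off},mj}\sqrt{\Omega_{\mathrm{diag},jj}/\Omega_{\mathrm{diag},mm}}\,X_j\Big\|_2^2+\lambda_1\|\Omega_{\mathrm{off}}\|_1 $$ such that $\hat\Omega^{\mathrm{spc}} = \Omega_{\mathrm{diag}}+\hat\Omega_{\mathrm{off}}$ satisfies $\operatorname{card}\operatorname{vech}\hat\Omega^{\mathrm{spc}}\le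 np$. That is, for every iteration $i$ of the alternating minimization defining the SPLICE and SPACE estimators, there exist SPLICE and SPACE estimates at the end of iteration $i$ with at most $np$ nonzero strictly lower-triangular entries.
   Context: The SPLICE estimator alternately minimizes the displayed SPLICE objective over a diagonal matrix $D$ and a zero-diagonal matrix $B$, forming at iteration $i$ the estimate $\hat\Omega^{\mathrm{spl},(i)} = (\hat D^{(i-1)})^{-2}(I-\hat B^{(i)})$, where $\hat B^{(i)}$ minimizes over $B$ with $D=\hat D^{(i-1)}$ fixed. The SPACE estimator alternately minimizes the displayed SPACE objective over $\Omega_{\mathrm{diag}}$ and $\Omega_{\mathrm{off}}$, with estimate $\hat\Omega^{\mathrm{spc},(i)} = \hat\Omega^{(i)}_{\mathrm{diag}}+\hat\Omega^{(i)}_{\mathrm{off}}$. $X_{-m}$ is $X$ with column $m$ removed; $B_{m\cdot}$ is the $m$th row of $B$ with the entry $B_{mm}$ removed; $\|\cdot\|_1$ is the elementwise $\ell_1$ norm. $\operatorname{vech}$ gives the vector of strictly lower-triangular entries of a $p\times p$ matrix, and $\operatorname{card}$ counts nonzero entries. *)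

(* Defs.v *)
From HB Require Import structures.
From mathcomp Require Import all_boot all_order all_algebra.
From mathcomp Require Import all_classical all_reals all_analysis.
Set Implicit Arguments. Unset Strict Implicit. Unset Printing Implicit Defensive.
Import Order.TTheory GRing.Theory Num.Theory.
Local Open Scope ring_scope.

Section Defs.
Variable R : realType.

Definition l1norm (p : nat) (A : 'M[R]_p) : R := \sum_i \sum_j `|A i j|.

Definition zero_diag (p : nat) (A : 'M[R]_p) : Prop := forall i, A i i = 0.

Definition pos_diag (p : nat) (D : 'M[R]_p) : Prop :=
  is_diag_mx D /\ forall i, 0 < D i i.

Definition card_vech (p : nat) (A : 'M[R]_p) : nat :=
  #|[set ij : 'I_p * 'I_p | (ij.2 < ij.1)%N && (A ij.1 ij.2 != 0)]|.

Definition splice_obj (n p : nat) (X : 'M[R]_(n, p)) (lam : R)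
    (D B : 'M[R]_p) : R :=
  - (1/2) * ln (\det D)
  + (1/2) * \sum_(m < p) ((D m m) ^+ 2)^-1 *
      \sum_(k < n) (X k m - \sum_(j < p | j != m) X k j * B m j) ^+ 2
  + lam * l1norm B.

Definition space_obj (n p : nat) (X : 'M[R]_(n, p)) (lam : R)
    (Od Oo : 'M[R]_p) : R :=
  - (1/2) * ln (\det Od)
  + (1/2) * \sum_(m < p) Od m m *
      \sum_(k < n) (X k m - \sum_(j < p | j != m)
                      Oo m j * Num.sqrt (Od j j / Od m m) * X k j) ^+ 2
  + lam * l1norm Oo.

Definition splice_est (p : nat) (D B : 'M[R]_p) : 'M[R]_p :=
  invmx (D *m D) *m (1%:M - B).

End Defs.

(* Main.v *)
Require Import Defs.
From HB Require Import structures.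
From mathcomp Require Import all_boot all_order all_algebra.
From mathcomp Require Import all_classical all_reals all_analysis.
From mathcomp Require Import ring lra.
Import Order.TTheory GRing.Theory Num.Theory.
Import numFieldTopology.Exports numFieldNormedType.Exports.
Local Open Scope ring_scope.
Section Lasso.
Variables (R : realType) (I J : finType) (a : J -> I -> R) (y : J -> R) (lam : R).

Definition LQ (t : I -> R) := \sum_k (y k - \sum_i a k i * t i) ^+ 2.
Definition LF (t : I -> R) := LQ t + lam * \sum_i `|t i|.

Lemma cadd (T : topologicalType) (f g : T -> R) :
  continuous f -> continuous g -> continuous (fun x => f x + g x).
Proof. by move=> hf hg x; exact: (continuousD (hf x) (hg x)). Qed.
Lemma csub (T : topologicalType) (f g : T -> R) :
  continuous f -> continuous g -> continuous (fun x => f x - g x).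
Proof. by move=> hf hg x; exact: (continuousB (hf x) (hg x)). Qed.
Lemma cmul (T : topologicalType) (f g : T -> R) :
  continuous f -> continuous g -> continuous (fun x => f x * g x).
Proof. by move=> hf hg x; exact: (continuousM (hf x) (hg x)). Qed.
Lemma cexp2 (T : topologicalType) (f : T -> R) :
  continuous f -> continuous (fun x => f x ^+ 2).
Proof. by move=> hf; under eq_fun do rewrite expr2; exact: cmul. Qed.

Lemma cont_sum (T : topologicalType) (K : finType) (F : K -> T -> R) :
  (forall k, continuous (F k)) -> continuous (fun x => \sum_k F k x).
Proof.
move=> H.
elim: (index_enum K) => [|k s IH].
  by under eq_fun do rewrite big_nil; exact: cst_continuous.
under eq_fun do rewrite big_cons.
by move=> x; exact: (continuousD (H k x) (IH x)).
Qed.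

Lemma LF_ge0 t : 0 <= lam -> 0 <= LF t.
Proof.
move=> l0; rewrite /LF /LQ; apply: addr_ge0.
  by apply: sumr_ge0 => k _; exact: sqr_ge0.
by apply: mulr_ge0 => //; apply: sumr_ge0.
Qed.

Lemma LF_ge_coord t i : 0 <= lam -> lam * `|t i| <= LF t.
Proof.
move=> l0; rewrite /LF; apply: ler_wpDl; first by apply: sumr_ge0 => k _; exact: sqr_ge0.
apply: ler_wpM2l => //.
by rewrite (bigD1 i) //= lerDl; apply: sumr_ge0.
Qed.

Lemma LF_exists_min : 0 < lam -> exists t0, forall t, LF t0 <= LF t.
Proof.
move=> l0.
pose G (v : 'rV[R]_#|I|) := LF (fun i => v ord0 (enum_rank i)).
have Gc : continuous G.
  rewrite /G /LF /LQ; apply: cadd.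
    apply: cont_sum => k; apply: cexp2; apply: csub; first exact: cst_continuous.
    apply: cont_sum => i; apply: cmul; first exact: cst_continuous.
    exact: coord_continuous.
  apply: cmul; first exact: cst_continuous.
  apply: cont_sum => i u.
  apply: (@continuous_comp _ _ _ (fun w : 'rV[R]_#|I| => w ord0 (enum_rank i)) Num.norm).
    exact: coord_continuous.
  exact: norm_continuous.
pose r := LF (fun=> 0) / lam.
have r0 : 0 <= r by rewrite /r divr_ge0 // ?LF_ge0 // ltW.
pose A : set (matrix R 1 #|I|) := fun v => forall j, (`[- r, r]%classic : set R) (v ord0 j).
have cA : compact A by apply: (@rV_compact R _ (fun=> `[- r, r]%classic)) => j; exact: segment_compact.
have A0 : A (0 : 'rV[R]_#|I|).
  by move=> j; rewrite /= mxE in_itv /= oppr_le0 r0.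
have [c cA' cmin] := EVT_min_rV (ex_intro _ _ A0) cA (continuous_subspaceT Gc).
exists (fun i => c ord0 (enum_rank i)) => t.
pose v : 'rV[R]_#|I| := \row_j t (enum_val j).
have tv : t = (fun i => v ord0 (enum_rank i)).
  by apply: funext => i; rewrite /v mxE enum_rankK.
have [vA|vA] := pselect (A v).
  by rewrite tv; apply: (cmin v); rewrite inE.
have [j /= hj] : exists j, ~ (`[- r, r]%classic : set R) (v ord0 j).
  by apply/existsNP.
apply: (le_trans (cmin 0 _)); first by rewrite inE.
have : r < `|v ord0 j|.
  by rewrite ltNge; apply/negP => H; apply: hj; rewrite /= in_itv /= -ler_norml.
rewrite /v mxE => H.
apply: ltW; apply: (lt_le_trans _ (LF_ge_coord t (enum_val j) (ltW l0))).
rewrite /G.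
have -> : (fun i => (0 : 'rV[R]_#|I|) ord0 (enum_rank i)) = (fun=> 0).
  by apply: funext => i; rewrite mxE.
by rewrite -ltr_pdivrMl // mulrC.
Qed.

Definition supp (t : I -> R) := [set i | t i != 0].
Definition indep (S : {set I}) := forall v : I -> R,
  (forall i, i \notin S -> v i = 0) -> (forall k, \sum_i a k i * v i = 0) ->
  forall i, v i = 0.

Lemma abs_step (x w tau : R) : 0 <= tau -> (x = 0 -> w = 0) ->
  (x * w < 0 -> tau * `|w| <= `|x|) -> `|x + tau * w| = `|x| + tau * (Num.sg x * w).
Proof.
move=> t0 xw H.
case: (ltrgtP x 0) => hx.
- rewrite ltr0_sg // (ltr0_norm hx) mulN1r.
  rewrite ler0_norm; first by rewrite opprD mulrN.
  case: (lerP w 0) => hw; first by nra.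
  have := H ltac:(nra); rewrite (gtr0_norm hw) (ltr0_norm hx); nra.
- rewrite gtr0_sg // (gtr0_norm hx) mul1r.
  rewrite ger0_norm //.
  case: (lerP 0 w) => hw; first by nra.
  have := H ltac:(nra); rewrite (ltr0_norm hw) (gtr0_norm hx); nra.
- by rewrite hx (xw hx) !mulr0 !addr0 normr0.
Qed.

Lemma sg_mul_ge0 (x w : R) : 0 <= x * w -> 0 <= Num.sg x * w.
Proof.
case: (ltrgtP x 0) => hx.
- by rewrite ltr0_sg // => H; nra.
- by rewrite gtr0_sg // => H; nra.
- by rewrite hx sgr0 mul0r.
Qed.

Definition sig_ t (u : I -> R) := \sum_i Num.sg (t i) * u i.

Lemma sig_neg_pick t u : sig_ t u < 0 -> exists i, t i * u i < 0.
Proof.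
move=> H; case: (pselect (exists i, t i * u i < 0)) => // Hn; exfalso.
move: H; apply/negP; rewrite -leNgt; apply: sumr_ge0 => i _.
by apply: sg_mul_ge0; rewrite leNgt; apply/negP => h; apply: Hn; exists i.
Qed.

Lemma step_key t u : 0 <= lam ->
  (forall i, t i = 0 -> u i = 0) -> (forall k, \sum_i a k i * u i = 0) ->
  sig_ t u <= 0 -> (exists i, t i * u i < 0) ->
  exists t', LF t' <= LF t /\ supp t' \subset supp t /\ (#|supp t'| < #|supp t|)%N.
Proof.
move=> l0 tu Au su [i1 Pi1].
pose P := fun i => t i * u i < 0.
case: (@arg_minP _ R _ i1 P (fun i => `|t i| / `|u i|) Pi1) => j Pj jmin.
pose tau := `|t j| / `|u j|.
have tau0 : 0 <= tau by rewrite /tau divr_ge0.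
pose t' := fun i => t i + tau * u i.
have hb i : P i -> tau * `|u i| <= `|t i|.
  move=> Pi; have ui : u i != 0 by apply/eqP => h; move: Pi; rewrite /P h mulr0 ltxx.
  by rewrite -ler_pdivlMr ?normr_gt0 //; exact: (jmin i Pi).
have hab i : `|t' i| = `|t i| + tau * (Num.sg (t i) * u i).
  by apply: abs_step => //; [exact: tu | exact: hb].
have tj0 : t' j = 0.
  have uj : u j != 0 by apply/eqP => h; move: Pj; rewrite /P h mulr0 ltxx.
  have tj : t j != 0 by apply/eqP => h; move: Pj; rewrite /P h mul0r ltxx.
  rewrite /t' /tau; move: Pj; rewrite /P => Pj.
  have -> : `|t j| / `|u j| * u j = - t j.
    have nu : `|u j| != 0 by rewrite normr_eq0.
    apply: (mulIf nu).
    by rewrite mulrAC divfK ?normr_eq0 //; case: (ltrgtP (t j) 0) => ht;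
      case: (ltrgtP (u j) 0) => hu; rewrite ?(ltr0_norm ht) ?(gtr0_norm ht)
        ?(ltr0_norm hu) ?(gtr0_norm hu); nra.
  by rewrite subrr.
exists t'; split; [|split].
- rewrite /LF; apply: lerD.
    rewrite le_eqVlt; apply/orP; left; apply/eqP; rewrite /LQ; apply: eq_bigr => k _.
    congr (_ ^+ 2); congr (_ - _); rewrite /t'.
    under eq_bigr do rewrite mulrDr mulrCA.
    by rewrite big_split /= -mulr_sumr Au mulr0 addr0.
  apply: ler_wpM2l => //.
  under eq_bigr do rewrite hab.
  rewrite big_split /= -mulr_sumr gerDl.
  exact: mulr_ge0_le0.
- apply/fintype.subsetP => i; idtac.
  rewrite !inE; apply: contra => /eqP ti.
  by rewrite /t' ti (tu _ ti) mulr0 addr0.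
- apply: proper_card; apply/properP; split.
    apply/fintype.subsetP => i; rewrite !inE; apply: contra => /eqP ti.
    by rewrite /t' ti (tu _ ti) mulr0 addr0.
  exists j; rewrite !inE ?tj0 ?eqxx //.
  by apply/eqP => h; move: Pj; rewrite /P h mul0r ltxx.
Qed.

Lemma step t : 0 <= lam -> indep (supp t) \/
  exists t', LF t' <= LF t /\ supp t' \subset supp t /\ (#|supp t'| < #|supp t|)%N.
Proof.
move=> l0.
case: (pselect (exists v : I -> R, (forall i, i \notin supp t -> v i = 0) /\
   (forall k, \sum_i a k i * v i = 0) /\ exists i, v i != 0))
  => [[v [vS [vA [i0 vi0]]]]|nex]; last first.
  left => v vS vA i; case: (pselect (v i = 0)) => // ne; exfalso; apply: nex.
  by exists v; do 2!split => //; exists i; apply/eqP.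
right.
have tu : forall i, t i = 0 -> v i = 0.
  by move=> i ti; apply: vS; rewrite inE ti eqxx.
have ti0 : t i0 != 0 by apply/eqP => h; move: vi0; rewrite (tu _ h) eqxx.
pose w := fun i => - v i.
have tw : forall i, t i = 0 -> w i = 0 by move=> i /tu; rewrite /w => ->; rewrite oppr0.
have Aw : forall k, \sum_i a k i * w i = 0.
  by move=> k; rewrite /w; under eq_bigr do rewrite mulrN; rewrite sumrN vA oppr0.
have sw : sig_ t w = - sig_ t v.
  by rewrite /sig_ /w -sumrN; apply: eq_bigr => i _; rewrite mulrN.
case: (ltrgtP (sig_ t v) 0) => hs.
- exact: step_key _ _ l0 tu vA (ltW hs) (sig_neg_pick _ _ hs).
- have hs' : sig_ t w < 0 by rewrite sw oppr_lt0.
  exact: step_key _ _ l0 tw Aw (ltW hs') (sig_neg_pick _ _ hs').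
- case: (ltrP (t i0 * v i0) 0) => hp.
    by apply: step_key _ _ l0 tu vA _ _; [rewrite hs | exists i0].
  apply: step_key _ _ l0 tw Aw _ _; first by rewrite sw hs oppr0.
  exists i0; rewrite /w mulrN oppr_lt0 lt_def hp andbT mulf_neq0 //.
Qed.

Lemma reduce t : 0 <= lam -> exists t', LF t' <= LF t /\ indep (supp t').
Proof.
move=> l0; move: {2}#|supp t| (leqnn #|supp t|) => n; elim: n t => [|n IH] t ht.
  case: (step t l0) => [H|[t' [_ [_ H]]]]; first by exists t.
  by move: (leq_trans H ht).
case: (step t l0) => [H|[t' [Ht' [_ H]]]]; first by exists t.
have [t'' [H1 H2]] := IH t' (leq_trans (leq_trans H ht) (leqnn _)).
by exists t''; split => //; exact: le_trans H1 Ht'.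
Qed.

Lemma indep_card S : indep S -> (#|S| <= #|J|)%N.
Proof.
move=> HS; rewrite leqNgt; apply/negP => hlt.
pose M : 'M[R]_(#|S|, #|J|) := \matrix_(r, c) a (enum_val c) (enum_val r).
pose K := kermx M.
have rK : (0 < \rank K)%N.
  rewrite mxrank_ker subn_gt0; exact: leq_ltn_trans (rank_leq_col M) hlt.
have [r0 [r1 Kr]] : exists r0 r1, K r0 r1 != 0.
  case: (pselect (exists r0 r1, K r0 r1 != 0)) => // nex; exfalso.
  have K0 : K = 0.
    apply/matrixP => i j; rewrite [RHS]mxE.
    case: (pselect (K i j = 0)) => // ne; exfalso.
    by apply: nex; exists i, j; apply/eqP.
  by move: rK; rewrite K0 mxrank0.
pose v := fun i => \sum_(r | enum_val r == i) K r0 r.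
have vS : forall i, i \notin S -> v i = 0.
  move=> i iS; rewrite /v big_pred0 // => r; apply/negP => /eqP e.
  by move: iS; rewrite -e enum_valP.
have vA : forall k, \sum_i a k i * v i = 0.
  move=> k; rewrite /v.
  under eq_bigr do rewrite mulr_sumr.
  under eq_bigr do rewrite big_mkcond /=.
  rewrite exchange_big /=.
  have E : forall r, \sum_i (if enum_val r == i then a k i * K r0 r else 0)
      = a k (enum_val r) * K r0 r.
    move=> r; rewrite -big_mkcond /= (eq_bigl (fun i => i == enum_val r)).
      exact: big_pred1_eq.
    by move=> i; rewrite eq_sym.
  under eq_bigr do rewrite E.
  have := mulmx_ker M; move/matrixP => /(_ r0 (enum_rank k)).
  rewrite !mxE => H; rewrite -[RHS]H; apply: eq_bigr => r _.
  have -> : M r (enum_rank k) = a k (enum_val r) by rewrite /M mxE enum_rankK.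
  by rewrite mulrC.
have := HS v vS vA (enum_val r1).
rewrite /v (big_pred1 r1) => [e|r]; first by move: Kr; rewrite e eqxx.
by apply/eqP/eqP => [/enum_val_inj|->].
Qed.

Lemma lasso_sparse : 0 < lam ->
  exists t0, (forall t, LF t0 <= LF t) /\ (#|supp t0| <= #|J|)%N.
Proof.
move=> l0; have [t1 H1] := LF_exists_min l0.
have [t0 [H0 Hi]] := reduce t1 (ltW l0).
exists t0; split; last exact: indep_card.
by move=> t; exact: le_trans H0 (H1 t).
Qed.

Lemma LF_zero_out (P : pred I) t : 0 <= lam -> (forall k i, P i -> a k i = 0) ->
  LF (fun i => if P i then 0 else t i) <= LF t.
Proof.
move=> l0 aP; rewrite /LF; apply: lerD.
  rewrite le_eqVlt; apply/orP; left; apply/eqP; rewrite /LQ; apply: eq_bigr => k _.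
  congr (_ ^+ 2); congr (_ - _); apply: eq_bigr => i _.
  by case: ifP => // Pi; rewrite aP // !mul0r.
apply: ler_wpM2l => //; apply: ler_sum => i _.
by case: ifP => // _; rewrite normr0.
Qed.
End Lasso.

Lemma sum_if_eq (R : realType) (I : finType) (m : I) (F : I -> R) :
  \sum_i (if i == m then F i else 0) = F m.
Proof. by rewrite -big_mkcond big_pred1_eq. Qed.

Lemma sum_pair (R : realType) (I J : finType) (F : I * J -> R) :
  \sum_k F k = \sum_i \sum_j F (i, j).
Proof. by rewrite pair_bigA; apply: eq_bigr => -[i j]. Qed.

Section Splice.
Variables (R : realType) (n p : nat) (X : 'M[R]_(n, p)) (lam : R) (D : 'M[R]_p).

Definition aS (mk : 'I_p * 'I_n) (ij : 'I_p * 'I_p) : R :=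
  if (ij.1 == mk.1) && (ij.2 != mk.1) then X mk.2 ij.2 / D mk.1 mk.1 else 0.
Definition yS (mk : 'I_p * 'I_n) : R := X mk.2 mk.1 / D mk.1 mk.1.

Lemma splice_id B :
  splice_obj X lam D B = - (1/2) * ln (\det D) +
    (1/2) * @LF R _ _ aS yS (2 * lam) (fun ij => B ij.1 ij.2).
Proof.
rewrite /splice_obj /LF /LQ -addrA; congr (_ + _).
rewrite mulrDr; congr (_ + _).
  congr (_ * _); rewrite sum_pair; apply: eq_bigr => m _.
  rewrite mulr_sumr; apply: eq_bigr => k _.
  rewrite [in RHS]sum_pair /= [in RHS](bigD1 m) //=.
  have -> : \sum_(i < p | i != m) \sum_j aS (m, k) (i, j) * B i j = 0.
    apply: big1 => i /negbTE im; apply: big1 => j _; by rewrite /aS /= im mul0r.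
  rewrite addr0.
  rewrite /yS /aS /= eqxx /=.
  rewrite (big_mkcond (fun j => j != m)) /=.
  have -> : \sum_j (if j != m then X k j / D m m else 0) * B m j =
            (\sum_j (if j != m then X k j * B m j else 0)) / D m m.
    rewrite mulr_suml; apply: eq_bigr => j _; case: ifP => _; last by rewrite !mul0r.
    by rewrite mulrAC.
  by rewrite -mulrBl exprMn exprVn mulrC.
rewrite /l1norm sum_pair /= !mulrA; congr (_ * _).
by rewrite mul1r mulVf ?mul1r // pnatr_eq0.
Qed.

Lemma diag_eq : pos_diag D -> D = diag_mx (\row_i D i i).
Proof.
move=> [/is_diag_mxP Dd _]; apply/matrixP => i j; rewrite !mxE.
by case: (eqVneq i j) => [->|ne]; rewrite ?mulr1n // mulr0n Dd.
Qed.

Lemma splice_part : 0 < lam -> pos_diag D ->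
  exists Bh : 'M[R]_p,
       [/\ zero_diag Bh,
           (forall B : 'M[R]_p, zero_diag B ->
              splice_obj X lam D Bh <= splice_obj X lam D B)
         & (card_vech (splice_est D Bh) <= n * p)%N].
Proof.
move=> l0 pD; have Deq := diag_eq pD; case: pD => Dd Dp.
have l0' : 0 < 2 * lam by rewrite mulr_gt0.
have [t0 [tmin tcard]] := @lasso_sparse R _ _ aS yS (2 * lam) l0'.
pose Bh : 'M[R]_p := \matrix_(i, j) if i == j then 0 else t0 (i, j).
have hB : (fun ij : 'I_p * 'I_p => Bh ij.1 ij.2) =
    (fun ij => if (fun ij : 'I_p * 'I_p => ij.1 == ij.2) ij then 0 else t0 ij).
  by apply: funext => -[i j]; rewrite mxE.
exists Bh; split.
- by move=> i; rewrite mxE eqxx.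
- move=> B _; rewrite !splice_id; apply: lerD => //.
  apply: ler_wpM2l; first by rewrite divr_ge0.
  rewrite hB; apply: le_trans (tmin _).
  apply: (@LF_zero_out R _ _ aS yS (2 * lam)); first exact: ltW.
  move=> k [i j] /= /eqP ->; rewrite /aS /=.
  by case: (j == k.1).
- rewrite /card_vech; apply: (@leq_trans #|@supp R _ t0|); last first.
    by rewrite (leq_trans tcard) // card_prod !card_ord mulnC.
  apply: subset_leq_card; apply/fintype.subsetP => -[i j]; rewrite !inE /=.
  case/andP => ji; apply: contra => /eqP t0z.
  have uD : D *m D \in unitmx.
    rewrite unitmxE det_mulmx Deq det_diag unitfE mulf_neq0 //;
      by rewrite prodf_seq_neq0; apply/allP => k _; rewrite mxE gt_eqF.
  have key := mulKVmx uD (1%:M - Bh).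
  move/matrixP: key => /(_ i j).
  rewrite -/(splice_est D Bh) -mulmxA [in X in X *m (_ *m _)]Deq mul_diag_mx mxE.
  rewrite [in X in X *m _]Deq mul_diag_mx !mxE.
  have ne : i != j by rewrite neq_ltn ji orbT.
  rewrite (negbTE ne) t0z /= mulr0n subr0 => /eqP.
  by rewrite !mulf_eq0 (gt_eqF (Dp i)) /=.
Qed.
End Splice.

Lemma sum_if_eqr (R : realType) (I : finType) (m : I) (F : I -> R) :
  \sum_i (if m == i then F i else 0) = F m.
Proof. by rewrite -big_mkcond (eq_bigl (fun i => i == m)) ?big_pred1_eq // => i; rewrite eq_sym. Qed.

Arguments sum_if_eq {R I} m F.
Lemma sum_sum_if1 (R : realType) (I J : finType) (m : I) (F : I -> J -> R) :
  \sum_i \sum_j (if i == m then F i j else 0) = \sum_j F m j.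
Proof.
rewrite -(sum_if_eq m (fun i => \sum_j F i j)); apply: eq_bigr => i _.
by case: ifP => _ //; rewrite big1.
Qed.

Arguments sum_sum_if1 {R I J} m F.
Lemma sum_sum_if2 (R : realType) (I J : finType) (m : J) (F : I -> J -> R) :
  \sum_i \sum_j (if j == m then F i j else 0) = \sum_i F i m.
Proof. by apply: eq_bigr => i _; exact: sum_if_eq. Qed.

Arguments sum_sum_if2 {R I J} m F.
Section Space.
Variables (R : realType) (n p : nat) (X : 'M[R]_(n, p)) (lam : R) (Od : 'M[R]_p).

Definition sq (m : 'I_p) : R := Num.sqrt (Od m m).
Definition aP (mk : 'I_p * 'I_n) (ij : 'I_p * 'I_p) : R :=
  if (ij.2 < ij.1)%N then
    (if ij.1 == mk.1 then sq ij.2 * X mk.2 ij.2 else 0) +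
    (if ij.2 == mk.1 then sq ij.1 * X mk.2 ij.1 else 0)
  else 0.
Definition yP (mk : 'I_p * 'I_n) : R := sq mk.1 * X mk.2 mk.1.
Definition thL (Oo : 'M[R]_p) (ij : 'I_p * 'I_p) : R :=
  if (ij.2 < ij.1)%N then Oo ij.1 ij.2 else 0.

Lemma space_id Oo : pos_diag Od -> Oo^T = Oo -> zero_diag Oo ->
  space_obj X lam Od Oo = - (1/2) * ln (\det Od) +
    (1/2) * @LF R _ _ aP yP (4 * lam) (thL Oo).
Proof.
move=> [_ Dp] HT HZ.
have sym i j : Oo i j = Oo j i by rewrite -{1}HT mxE.
rewrite /space_obj /LF /LQ -addrA; congr (_ + _).
rewrite mulrDr; congr (_ + _).
  congr (_ * _); rewrite sum_pair; apply: eq_bigr => m _; rewrite mulr_sumr; apply: eq_bigr => k _.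
  have A1 : \sum_ij aP (m, k) ij * thL Oo ij =
      \sum_(j | j != m) Oo m j * (sq j * X k j).
    rewrite sum_pair /=.
    have E i j : aP (m, k) (i, j) * thL Oo (i, j) =
        (if i == m then (if (j < i)%N then Oo i j * (sq j * X k j) else 0) else 0) +
        (if j == m then (if (j < i)%N then Oo i j * (sq i * X k i) else 0) else 0).
      rewrite /aP /thL /=; case: ifP => ji; last by rewrite mul0r !if_same addr0.
      by rewrite mulrDl; congr (_ + _); case: ifP => _; rewrite ?mul0r // mulrC.
    rewrite (eq_bigr _ (fun i _ => eq_bigr _ (fun j _ => E i j))).
    under eq_bigr do rewrite big_split /=.
    rewrite big_split /=.
    rewrite (sum_sum_if1 m (fun i j : 'I_p => if (j < i)%N then Oo i j * (sq j * X k j) else 0)).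
    rewrite (sum_sum_if2 m (fun i j : 'I_p => if (j < i)%N then Oo i j * (sq i * X k i) else 0)).
    rewrite (big_mkcond (fun j => j != m)) -big_split /=; apply: eq_bigr => j _.
    case: (ltngtP j m) => hj.
    - have ne : j != m by apply/eqP => e; move: hj; rewrite e ltnn.
      by rewrite addr0 ne.
    - have ne : j != m by apply/eqP => e; move: hj; rewrite e ltnn.
      by rewrite add0r ne sym.
    - by rewrite (val_inj hj) eqxx addr0.
  rewrite A1.
  have hs : sq m != 0 by rewrite /sq gt_eqF // sqrtr_gt0.
  have -> : \sum_(j < p | j != m) Oo m j * Num.sqrt (Od j j / Od m m) * X k j =
      (\sum_(j | j != m) Oo m j * (sq j * X k j)) / sq m.
    rewrite mulr_suml; apply: eq_bigr => j _.
    rewrite sqrtrM ?(ltW (Dp j)) // sqrtrV ?(ltW (Dp m)) // -/(sq j) -/(sq m).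
    by rewrite !mulrA mulrAC.
  rewrite -[Od m m](sqr_sqrtr (ltW (Dp m))) -/(sq m) -exprMn; congr (_ ^+ 2).
  by rewrite /yP /= mulrBr [sq m * (_ / _)]mulrC divfK.
have T : \sum_ij `|thL Oo ij| = \sum_(i : 'I_p) \sum_(j : 'I_p) (if (j < i)%N then `|Oo i j| else 0).
  rewrite sum_pair; apply: eq_bigr => i _; apply: eq_bigr => j _.
  by rewrite /thL /=; case: ifP => _; rewrite ?normr0.
have L : l1norm Oo = 2 * \sum_ij `|thL Oo ij|.
  rewrite /l1norm T.
  have E i j : `|Oo i j| = (if (j < i)%N then `|Oo i j| else 0) +
      (if (i < j)%N then `|Oo j i| else 0).
    case: (ltngtP j i) => h; first by rewrite addr0.
      by rewrite add0r sym.
    by rewrite (val_inj h) HZ normr0 addr0.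
  rewrite (eq_bigr _ (fun i _ => eq_bigr _ (fun j _ => E i j))).
  under eq_bigr do rewrite big_split /=.
  rewrite big_split /= [X in _ + X]exchange_big /=.
  by rewrite mulr_natl mulr2n.
by rewrite L; field.
Qed.

Lemma space_part : 0 < lam -> pos_diag Od ->
  exists Ooh : 'M[R]_p,
       [/\ Ooh^T = Ooh, zero_diag Ooh,
           (forall Oo : 'M[R]_p, Oo^T = Oo -> zero_diag Oo ->
              space_obj X lam Od Ooh <= space_obj X lam Od Oo)
         & (card_vech (Od + Ooh) <= n * p)%N].
Proof.
move=> l0 pD; have [/is_diag_mxP Dd Dp] := pD.
have l0' : 0 < 4 * lam by rewrite mulr_gt0.
have [t0 [tmin tcard]] := @lasso_sparse R _ _ aP yP (4 * lam) l0'.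
pose Ooh : 'M[R]_p := \matrix_(i, j)
  if (j < i)%N then t0 (i, j) else if (i < j)%N then t0 (j, i) else 0.
have HT : Ooh^T = Ooh.
  apply/matrixP => i j; rewrite !mxE.
  by case: (ltngtP j i).
have HZ : zero_diag Ooh by move=> i; rewrite mxE ltnn.
have hB : thL Ooh =
    (fun ij => if (fun ij : 'I_p * 'I_p => ~~ (ij.2 < ij.1)%N) ij then 0 else t0 ij).
  apply: funext => -[i j]; rewrite /thL mxE /=.
  by case: (j < i)%N.
exists Ooh; split => //.
- move=> Oo OT OZ; rewrite !space_id //; apply: lerD => //.
  apply: ler_wpM2l; first by rewrite divr_ge0.
  rewrite hB; apply: le_trans (tmin _).
  apply: (@LF_zero_out R _ _ aP yP (4 * lam)); first exact: ltW.
  by move=> k [i j] /= /negbTE h; rewrite /aP /= h.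
- rewrite /card_vech; apply: (@leq_trans #|@supp R _ t0|); last first.
    by rewrite (leq_trans tcard) // card_prod !card_ord mulnC.
  apply: subset_leq_card; apply/fintype.subsetP => -[i j]; rewrite !inE /=.
  case/andP => ji; rewrite !mxE ji Dd ?add0r //.
  by rewrite neq_ltn ji orbT.
Qed.
End Space.

Theorem corollary1 (R : realType) (n p : nat) (X : 'M[R]_(n, p)) (lam : R) :
  0 < lam -> (n * p < p * (p - 1) %/ 2)%N ->
  (forall D : 'M[R]_p, pos_diag D ->
     exists Bh : 'M[R]_p,
       [/\ zero_diag Bh,
           (forall B : 'M[R]_p, zero_diag B ->
              splice_obj X lam D Bh <= splice_obj X lam D B)
         & (card_vech (splice_est D Bh) <= n * p)%N])
  /\
  (forall Od : 'M[R]_p, pos_diag Od ->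
     exists Ooh : 'M[R]_p,
       [/\ Ooh^T = Ooh, zero_diag Ooh,
           (forall Oo : 'M[R]_p, Oo^T = Oo -> zero_diag Oo ->
              space_obj X lam Od Ooh <= space_obj X lam Od Oo)
         & (card_vech (Od + Ooh) <= n * p)%N]).
Proof.
move=> l0 _; split => D pD.
  exact: splice_part.
exact: space_part.
Qed.
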